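(* Let $X$ be a finite set and $f:2^X\to\mathbb{R}_{\ge0}$ a normalized monotone submodular function which possesses supermodularity of conditioning. Then for every $S\subseteq X$ and every $x\in X\setminus S$, \[ f(x\mid S)\ \ge\ f(x)-\sum_{y\in S}\big(f(x)-f(x\mid y)\big). \]
   Context: $f(x\mid A):=f(A\cup\{x\})-f(A)$, and more generally for sets $T,A$, $f(T\mid A):=f(A\cup T)-f(A)$; $f(T\mid A,C):=f(T\mid A\cup C)$; $f(x):=f(\{x\})$, $f(x\mid y):=f(x\mid\{y\})$. Supermodularity of conditioning: for all $S\subseteq X$, $A\subseteq B\subseteq X$ and $C\subseteq X\setminus B$, $f(S\mid A)-f(S\mid A\cup C)\ge f(S\mid B)-f(S\mid B\cup C)$. *)

(* Defs.v *)
From HB Require Import structures.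
From mathcomp Require Import all_boot all_order all_algebra.
Set Implicit Arguments. Unset Strict Implicit. Unset Printing Implicit Defensive.
Import Order.TTheory GRing.Theory Num.Theory.
Local Open Scope ring_scope.

Section SetFun.
Variables (T : finType) (R : realFieldType).

Definition mgain (f : {set T} -> R) (B A : {set T}) : R := f (A :|: B) - f A.

Definition nonneg_setfun (f : {set T} -> R) : Prop := forall A, 0 <= f A.
Definition normalized (f : {set T} -> R) : Prop := f set0 = 0.
Definition monotone_setfun (f : {set T} -> R) : Prop :=
  forall A B : {set T}, A \subset B -> f A <= f B.
Definition submodular (f : {set T} -> R) : Prop :=
  forall A B : {set T}, f (A :|: B) + f (A :&: B) <= f A + f B.

Definition supermod_conditioning (f : {set T} -> R) : Prop :=
  forall S A B C : {set T}, A \subset B -> C \subset ~: B ->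
    mgain f S A - mgain f S (A :|: C) >= mgain f S B - mgain f S (B :|: C).

End SetFun.

(* Main.v *)
Require Import Defs.
From HB Require Import structures.
From mathcomp Require Import all_boot all_order all_algebra.
From mathcomp Require Import lra.
Import Order.TTheory GRing.Theory Num.Theory.
Local Open Scope ring_scope.

Theorem theorem4 (T : finType) (R : realFieldType) (f : {set T} -> R) :
  nonneg_setfun f -> normalized f -> monotone_setfun f -> submodular f ->
  supermod_conditioning f ->
  forall (S : {set T}) (x : T), x \notin S ->
    mgain f [set x] S >=
      f [set x] - \sum_(y in S) (f [set x] - mgain f [set x] [set y]).
Proof.
move=> _ hn _ _ hsc S x _.
have h0 : mgain f [set x] set0 = f [set x].
  by rewrite /mgain set0U hn subr0.
elim: {S} #|S| {-2}S (erefl #|S|) => [|n IH] S hS.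
  move/eqP: hS; rewrite cards_eq0 => /eqP ->.
  by rewrite big_set0 subr0 h0.
have [y yS] : exists y, y \in S.
  apply/set0Pn; rewrite -card_gt0 hS //.
rewrite (big_setD1 y yS) /=.
have hS' : #|S :\ y| = n.
  by move: hS; rewrite (cardsD1 y S) yS add1n => -[].
have := IH _ hS'.
have := hsc [set x] set0 (S :\ y) [set y] (sub0set _).
rewrite set0U (setUC (S :\ y)) setD1K //.
have -> : [set y] \subset ~: (S :\ y).
  by rewrite sub1set inE in_setD1 eqxx.
rewrite h0 => /(_ isT) h1 h2.
lra.
Qed.
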